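(* Let $R$ be a System F type with $\mathrm{FV}(R)=\{X\}$ and $X\in^+ R$, and let $\gamma$ be any environment. Then for all terms $t,t'$: (i) $t\,\llbracket D_{\mathrm{ind}}\subseteq D_{\mathrm{param}}\rrbracket_\gamma\,t'$; (ii) if $R$ is $\forall^+$, then $t\,\llbracket D_{\mathrm{param}}\subseteq D_{\mathrm{ind}}\rrbracket_\gamma\,t'$; (iii) if $R$ is $\forall^+$, then $t\,\llbracket D_{\mathrm{ind}}\simeq D_{\mathrm{param}}\rrbracket_\gamma\,t'$.
   Context: Terms are those of the pure untyped $\lambda$-calculus, $t ::= x \mid \lambda x.t \mid t\,t'$, up to $\alpha$-equivalence; $=_{\beta\eta}$ is $\beta\eta$-convertibility. Relational types: $R ::= X \mid R\to R' \mid \forall X.R \mid R^{\cup} \mid R\cdot R' \mid t$ (the last is promotion of a term to a type); System F types are those built only from type variables, $\to$ and $\forall$. A relation $r$ on terms is $\beta\eta$-closed if $t_1\,r\,t_2$, $t_1'=_{\beta\eta}t_1$, $t_2'=_{\beta\eta}t_2$ imply $t_1'\,r\,t_2'$; $\mathcal{R}$ is the set of such relations. An environment $\gamma$ maps type variables to $\mathcal{R}$. Interpretation: $\llbracket X\rrbracket_\gamma=\gamma(X)$; $t\,\llbracket R\to R'\rrbracket_\gamma\,t'$ iff $a\,\llbracket R\rrbracket_\gamma\,a'$ implies $t\,a\,\llbracket R'\rrbracket_\gamma\,t'\,a'$ for all $a,a'$; $\llbracket \forall X.R\rrbracket_\gamma=\bigcap_{r\in\mathcal{R}}\llbracket R\rrbracket_{\gamma[X\mapsto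 r]}$; $t\,\llbracket R^\cup\rrbracket_\gamma\,t'$ iff $t'\,\llbracket R\rrbracket_\gamma\,t$; $t\,\llbracket R\cdot R'\rrbracket_\gamma\,t'$ iff $\exists t''$, $t\,\llbracket R\rrbracket_\gamma\,t''$ and $t''\,\llbracket R'\rrbracket_\gamma\,t'$; $\llbracket \hat t\rrbracket_\gamma=\{(t,t')\mid \hat t\,t=_{\beta\eta}t'\}$. Term abbreviations: $I:=\lambda x.x$, $K:=\lambda x.\lambda y.x$, $t\circ t':=\lambda x.t\,(t'\,x)$. Type abbreviations: $[t]R:=(K\,t)\cdot R$; $R[t]:=R\cdot (K\,t)^\cup$; $t\bullet R := t\cdot R\cdot t^\cup$; $R\subseteq R' := (K\,I)\bullet(R\to R')$; $R\Rightarrow R' := K\bullet (R\to R')$; $R\simeq R' := (R\subseteq R')\cdot(R'\subseteq R)$. Polarities $p\in\{+,-\}$, $\bar p$ the other. $X\in^p R$ is defined by: $X\in^+X$; $X\in^p Y$ for type variables $Y\neq X$; $X\in^p(R\to R')$ iff $X\in^{\bar p}R$ and $X\in^p R'$; $X\in^p\forall Y.R$ iff $X\in^p R$; $X\in^p (R\cdot R')$ iff $X\in^pR$ and $X\in^pR'$; $X\in^p R^\cup$ iff $X\in^p R$; $X\in^p t$ for promoted terms. The property $\forall^p$: type variables are $\forall^p$; if $R$ is $\forall^{\bar p}$ and $R'$ is $\forall^p$ then $R\to R'$ is $\forall^p$; if $R$ is $\forall^+$ then $\forall X.R$ is $\forall^+$; if $R$ is $\forall^p$ so is $R^\cup$;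 a promotion of $t=_{\beta\eta}I$ is $\forall^p$. For System F types define $\mathit{fmap}_{X,R}$ by recursion: $\mathit{fmap}_{X,X}=I$; $\mathit{fmap}_{X,Y}=K\,I$ ($Y\ne X$); $\mathit{fmap}_{X,R\to R'}=\lambda f.\lambda a.\,\mathit{fmap}_{X,R'}\,f\circ a\circ \mathit{fmap}_{X,R}\,f$; $\mathit{fmap}_{X,\forall Y.R}=\lambda f.\,\mathit{fmap}_{X,R}\,f$ (bound variable renamed to differ from $X$). Let $\mathit{fold}:=\lambda a.\lambda x.x\,a$ and $\mathit{in}_{X,R}:=\lambda x.\lambda a.\,a\,(\mathit{fmap}_{X,R}\,(\mathit{fold}\,a)\,x)$. Define $D_{\mathrm{param}}:=\forall X.(R\to X)\to X$ and $D_{\mathrm{ind}}:=\forall X.\big([\mathit{in}_{X,R}]\,(R\to X)\,[\mathit{in}_{X,R}]\big)\Rightarrow X$. *)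

(* Defs.v *)
From Stdlib Require Import Arith Relations.

Inductive term : Type :=
| Var : nat -> term
| Lam : term -> term
| App : term -> term -> term.

Fixpoint lift_at (c : nat) (t : term) : term :=
  match t with
  | Var n => if Nat.ltb n c then Var n else Var (S n)
  | Lam b => Lam (lift_at (S c) b)
  | App u v => App (lift_at c u) (lift_at c v)
  end.

Definition lift (t : term) : term := lift_at 0 t.

Fixpoint liftn (k : nat) (t : term) : term :=
  match k with 0 => t | S k' => lift (liftn k' t) end.

Fixpoint subst_at (k : nat) (s : term) (t : term) : term :=
  match t with
  | Var n => if Nat.ltb n k then Var n
             else if Nat.eqb n k then liftn k s else Var (pred n)
  | Lam b => Lam (subst_at (S k) s b)
  | App u v => App (subst_at k s u) (subst_at k s v)
  end.

Inductive step : term -> term -> Prop :=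
| step_beta : forall b a, step (App (Lam b) a) (subst_at 0 a b)
| step_eta : forall t, step (Lam (App (lift t) (Var 0))) t
| step_lam : forall b b', step b b' -> step (Lam b) (Lam b')
| step_appl : forall u u' v, step u u' -> step (App u v) (App u' v)
| step_appr : forall u v v', step v v' -> step (App u v) (App u v').

Definition conv : term -> term -> Prop := clos_refl_sym_trans term step.

Definition I : term := Lam (Var 0).
Definition K : term := Lam (Lam (Var 1)).
(* t o t' := \x. t (t' x) *)
Definition comp (t t' : term) : term := Lam (App (lift t) (App (lift t') (Var 0))).
(* fold := \a.\x. x a *)
Definition fold : term := Lam (Lam (App (Var 0) (Var 1))).

Inductive rty : Type :=
| TVar : nat -> rty
| Arr : rty -> rty -> rty
| All : rty -> rty
| Conv : rty -> rty
| Comp : rty -> rty -> rty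
| Prom : term -> rty.

Fixpoint isF (R : rty) : Prop :=
  match R with
  | TVar _ => True
  | Arr A B => isF A /\ isF B
  | All A => isF A
  | _ => False
  end.

Fixpoint occurs (k : nat) (R : rty) : Prop :=
  match R with
  | TVar n => n = k
  | Arr A B => occurs k A \/ occurs k B
  | All A => occurs (S k) A
  | Conv A => occurs k A
  | Comp A B => occurs k A \/ occurs k B
  | Prom _ => False
  end.

(* FV(R) = {X}, where X is the variable with index 0 *)
Definition FV_is_X (R : rty) : Prop :=
  occurs 0 R /\ forall n, n <> 0 -> ~ occurs n R.

(* polarity: occ k p R  means  X_k \in^p R ; p = true is +, false is - *)
Fixpoint occ (k : nat) (p : bool) (R : rty) : Prop :=
  match R with
  | TVar n => if Nat.eqb n k then p = true else True
  | Arr A B => occ k (negb p) A /\ occ k p B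
  | All A => occ (S k) p A
  | Comp A B => occ k p A /\ occ k p B
  | Conv A => occ k p A
  | Prom _ => True
  end.

Inductive forallp : bool -> rty -> Prop :=
| fa_var : forall p n, forallp p (TVar n)
| fa_arr : forall p A B, forallp (negb p) A -> forallp p B -> forallp p (Arr A B)
| fa_all : forall A, forallp true A -> forallp true (All A)
| fa_conv : forall p A, forallp p A -> forallp p (Conv A)
| fa_prom : forall p t, conv t I -> forallp p (Prom t).

Definition rel := term -> term -> Prop.

Definition bclosed (r : rel) : Prop :=
  forall t1 t2 t1' t2', r t1 t2 -> conv t1' t1 -> conv t2' t2 -> r t1' t2'.

Definition env := nat -> rel.

Definition env_ok (g : env) : Prop := forall n, bclosed (g n).

Definition scons (r : rel) (g : env) : env :=
  fun n => match n with 0 => r | S m => g m end.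

Fixpoint interp (g : env) (R : rty) : rel :=
  match R with
  | TVar n => g n
  | Arr A B => fun t t' => forall a a', interp g A a a' -> interp g B (App t a) (App t' a')
  | All A => fun t t' => forall r : rel, bclosed r -> interp (scons r g) A t t'
  | Conv A => fun t t' => interp g A t' t
  | Comp A B => fun t t' => exists t'', interp g A t t'' /\ interp g B t'' t'
  | Prom s => fun t t' => conv (App s t) t'
  end.

Definition brL (t : term) (R : rty) : rty := Comp (Prom (App K t)) R.
Definition brR (R : rty) (t : term) : rty := Comp R (Conv (Prom (App K t))).
Definition bullet (t : term) (R : rty) : rty := Comp (Comp (Prom t) R) (Conv (Prom t)).
Definition tsub (A B : rty) : rty := bullet (App K I) (Arr A B).
Definition timp (A B : rty) : rty := bullet K (Arr A B).
Definition tequiv (A B : rty) : rty := Comp (tsub A B) (tsub B A).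

Fixpoint fmap (k : nat) (R : rty) : term :=
  match R with
  | TVar j => if Nat.eqb j k then I else App K I
  | Arr A B =>
      (* \f.\a. fmap B f o a o fmap A f *)
      Lam (Lam (comp (App (liftn 2 (fmap k B)) (Var 1))
                     (comp (Var 0) (App (liftn 2 (fmap k A)) (Var 1)))))
  | All A => Lam (App (lift (fmap (S k) A)) (Var 0))
  | _ => I (* not used: only System F types *)
  end.

(* in_{X,R} := \x.\a. a (fmap_{X,R} (fold a) x), X = index 0 *)
Definition inXR (R : rty) : term :=
  Lam (Lam (App (Var 0) (App (App (liftn 2 (fmap 0 R)) (App fold (Var 0))) (Var 1)))).

(* R is the body with X = index 0 free; the forall X binds it *)
Definition Dparam (R : rty) : rty := All (Arr (Arr R (TVar 0)) (TVar 0)).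
Definition Dind (R : rty) : rty :=
  All (timp (brR (brL (inXR R) (Arr R (TVar 0))) (inXR R)) (TVar 0)).

(* Main.v *)
Require Import Defs.
From Stdlib Require Import Arith Lia Relations.

Lemma conv_refl t : conv t t. Proof. apply rst_refl. Qed.
Lemma conv_sym a b : conv a b -> conv b a. Proof. apply rst_sym. Qed.
Lemma conv_trans a b c : conv a b -> conv b c -> conv a c. Proof. apply rst_trans. Qed.
Lemma conv_step a b : step a b -> conv a b. Proof. apply rst_step. Qed.

Lemma conv_appl u u' v : conv u u' -> conv (App u v) (App u' v).
Proof. induction 1; [apply conv_step; now constructor|apply conv_refl|now apply conv_sym|eapply conv_trans; eauto]. Qed.
Lemma conv_appr u v v' : conv v v' -> conv (App u v) (App u v').
Proof. induction 1; [apply conv_step; now constructor|apply conv_refl|now apply conv_sym|eapply conv_trans; eauto]. Qed.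
Lemma conv_app u u' v v' : conv u u' -> conv v v' -> conv (App u v) (App u' v').
Proof. intros; eapply conv_trans; [apply conv_appl|apply conv_appr]; eauto. Qed.
Lemma conv_lam b b' : conv b b' -> conv (Lam b) (Lam b').
Proof. induction 1; [apply conv_step; now constructor|apply conv_refl|now apply conv_sym|eapply conv_trans; eauto]. Qed.

Fixpoint wf (n : nat) (t : term) : Prop :=
  match t with Var m => m < n | Lam b => wf (S n) b | App u v => wf n u /\ wf n v end.

Lemma wf_mono t : forall n m, wf n t -> n <= m -> wf m t.
Proof. induction t; simpl; intros; try lia; firstorder; eapply IHt; eauto; lia. Qed.

Lemma wf_lift t : forall n c, wf n t -> n <= c -> lift_at c t = t.
Proof.
  induction t; simpl; intros.
  - destruct (Nat.ltb_spec n c); auto; lia.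
  - f_equal; eapply IHt; eauto; lia.
  - destruct H; f_equal; eauto.
Qed.

Lemma wf_subst t : forall n k s, wf n t -> n <= k -> subst_at k s t = t.
Proof.
  induction t; simpl; intros.
  - destruct (Nat.ltb_spec n k); auto; lia.
  - f_equal; eapply IHt; eauto; lia.
  - destruct H; f_equal; eauto.
Qed.

Lemma wf_liftn t k : wf 0 t -> liftn k t = t.
Proof. induction k; simpl; intros; auto. rewrite IHk; auto. unfold lift. eapply wf_lift; eauto. Qed.

Lemma subst_lift t : forall k s, subst_at k s (lift_at k t) = t.
Proof.
  induction t; simpl; intros.
  - destruct (Nat.ltb_spec n k); simpl.
    + destruct (Nat.ltb_spec n k); auto; lia.
    + destruct (Nat.ltb_spec (S n) k); try lia. destruct k; [auto|]. destruct (Nat.eqb_spec n k); try lia. auto.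
  - f_equal; auto.
  - f_equal; auto.
Qed.

Definition up (r : nat -> nat) (n : nat) : nat := match n with 0 => 0 | S m => S (r m) end.
Fixpoint rename (r : nat -> nat) (t : term) : term :=
  match t with Var n => Var (r n) | Lam b => Lam (rename (up r) b) | App u v => App (rename r u) (rename r v) end.

Lemma rename_ext t : forall r1 r2, (forall n, r1 n = r2 n) -> rename r1 t = rename r2 t.
Proof.
  induction t; simpl; intros; f_equal; auto.
  apply IHt. intros [|n]; simpl; auto.
Qed.

Lemma rename_comp t : forall r1 r2, rename r1 (rename r2 t) = rename (fun n => r1 (r2 n)) t.
Proof.
  induction t; simpl; intros; f_equal; auto.
  rewrite IHt. apply rename_ext. intros [|n]; simpl; auto.
Qed.

Lemma rename_id t : forall r, (forall n, r n = n) -> rename r t = t.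
Proof.
  induction t; simpl; intros; f_equal; auto.
  apply IHt. intros [|n]; simpl; auto.
Qed.

Definition liftr (c : nat) (n : nat) : nat := if Nat.ltb n c then n else S n.

Lemma lift_rename t : forall c, lift_at c t = rename (liftr c) t.
Proof.
  induction t; simpl; intros; auto.
  - unfold liftr. destruct (n <? c); auto.
  - f_equal. rewrite IHt. apply rename_ext. intros [|n]; unfold liftr; simpl; auto.
    destruct (Nat.ltb_spec n c); destruct (Nat.ltb_spec (S n) (S c)); auto; lia.
  - f_equal; auto.
Qed.

Lemma liftn_rename k t : liftn k t = rename (fun n => k + n) t.
Proof.
  induction k; simpl.
  - symmetry. apply rename_id. auto.
  - rewrite IHk. unfold lift. rewrite lift_rename, rename_comp. apply rename_ext.
    intros n. unfold liftr. simpl. auto.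
Qed.

Definition upk (k : nat) (r : nat -> nat) (n : nat) : nat :=
  if Nat.ltb n k then n else k + r (n - k).

Lemma upk_lt k r n : n < k -> upk k r n = n.
Proof. unfold upk; intros; destruct (Nat.ltb_spec n k); lia. Qed.
Lemma upk_ge k r n : k <= n -> upk k r n = k + r (n - k).
Proof. unfold upk; intros; destruct (Nat.ltb_spec n k); lia. Qed.

Lemma rename_subst t : forall k r s,
  rename (upk k r) (subst_at k s t) = subst_at k (rename r s) (rename (upk (S k) r) t).
Proof.
  induction t; intros k r s.
  - simpl. destruct (Nat.ltb_spec n k).
    + rewrite (upk_lt (S k)) by lia. destruct (Nat.ltb_spec n k); try lia. simpl.
      rewrite upk_lt by lia. auto.
    + destruct (Nat.eqb_spec n k).
      * subst. rewrite upk_lt by lia. rewrite Nat.ltb_irrefl, Nat.eqb_refl.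
        rewrite !liftn_rename, !rename_comp. apply rename_ext. intros m.
        rewrite upk_ge by lia. f_equal. f_equal. lia.
      * rewrite upk_ge by lia.
        destruct (Nat.ltb_spec (S k + r (n - S k)) k); try lia.
        destruct (Nat.eqb_spec (S k + r (n - S k)) k); try lia.
        simpl. rewrite upk_ge by lia. f_equal.
        replace (pred n - k) with (n - S k) by lia. auto.
  - simpl. f_equal.
    rewrite (rename_ext _ (up (upk k r)) (upk (S k) r)).
    + rewrite IHt. f_equal. apply rename_ext. intros [|n]; simpl.
      * rewrite !upk_lt by lia. auto.
      * destruct (Nat.ltb_spec n (S k)).
        -- rewrite !upk_lt by lia. auto.
        -- rewrite !upk_ge by lia. simpl. auto.
    + intros [|n]; simpl.
      * rewrite !upk_lt by lia. auto.
      * destruct (Nat.ltb_spec n k).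
        -- rewrite !upk_lt by lia. auto.
        -- rewrite !upk_ge by lia. simpl. auto.
  - simpl. f_equal; auto.
Qed.

Lemma rename_step t1 t2 : step t1 t2 -> forall r, step (rename r t1) (rename r t2).
Proof.
  induction 1; intros r; simpl; try (constructor; auto; fail).
  - pose proof (rename_subst b 0 r a) as E.
    rewrite (rename_ext _ (upk 0 r) r) in E by (intros n; unfold upk; simpl; f_equal; lia).
    rewrite E. rewrite (rename_ext b (upk 1 r) (up r)).
    + constructor.
    + intros [|n]; unfold upk; simpl; auto. f_equal. f_equal. lia.
  - unfold lift. rewrite !lift_rename, !rename_comp.
    replace (rename (fun n => up r (liftr 0 n)) t) with (rename (liftr 0) (rename r t)).
    + rewrite <- lift_rename. constructor.
    + rewrite rename_comp. apply rename_ext. intros n; unfold liftr; simpl; auto.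
Qed.

Lemma rename_conv t1 t2 r : conv t1 t2 -> conv (rename r t1) (rename r t2).
Proof.
  induction 1; [apply conv_step; now apply rename_step|apply conv_refl|now apply conv_sym|eapply conv_trans; eauto].
Qed.

Fixpoint fvb (t : term) : nat :=
  match t with Var n => S n | Lam b => pred (fvb b) | App u v => max (fvb u) (fvb v) end.

Lemma wf_fvb t : wf (fvb t) t.
Proof.
  induction t; simpl.
  - lia.
  - eapply wf_mono; eauto; lia.
  - split; eapply wf_mono; eauto; lia.
Qed.

Lemma rename_wf_ext t : forall n r1 r2, wf n t -> (forall m, m < n -> r1 m = r2 m) -> rename r1 t = rename r2 t.
Proof.
  induction t; simpl; intros.
  - f_equal; auto.
  - f_equal. eapply IHt; eauto. intros [|m] Hm; simpl; auto. f_equal. apply H0. lia.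
  - destruct H; f_equal; eauto.
Qed.

Lemma EXT u u' : (forall a, conv (App u a) (App u' a)) -> conv u u'.
Proof.
  intros H.
  set (N := max (fvb u) (fvb u')).
  set (r := fun n => if Nat.eqb n N then 0 else S n).
  pose proof (rename_conv _ _ r (H (Var N))) as H1. simpl in H1.
  unfold r at 2 4 in H1. rewrite Nat.eqb_refl in H1.
  assert (E : forall v, fvb v <= N -> rename r v = lift v).
  { intros v Hv. unfold lift. rewrite lift_rename. eapply rename_wf_ext.
    - eapply wf_mono; [apply wf_fvb|exact Hv].
    - intros m Hm. unfold r, liftr. destruct (Nat.eqb_spec m N); try lia. simpl. auto. }
  rewrite !E in H1 by (unfold N; lia).
  apply conv_lam in H1.
  eapply conv_trans; [apply conv_sym, conv_step, step_eta|].
  eapply conv_trans; [exact H1|apply conv_step, step_eta].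
Qed.

Lemma env_ok_scons r g : bclosed r -> env_ok g -> env_ok (scons r g).
Proof. intros Hr Hg [|n]; simpl; auto. Qed.

Lemma interp_bclosed R : forall g, env_ok g -> bclosed (interp g R).
Proof.
  induction R; simpl; intros g Hg; unfold bclosed; intros t1 t2 t1' t2' H H1 H2.
  - eapply Hg; eauto.
  - intros a a' Ha. eapply IHR2; eauto; apply conv_appl; auto.
  - intros r Hr. eapply IHR; eauto. apply env_ok_scons; auto.
  - eapply IHR; eauto.
  - destruct H as [u [Hu1 Hu2]]. exists u; split; [eapply IHR1|eapply IHR2]; eauto using conv_refl.
  - eapply conv_trans; [apply conv_appr; eauto|]. eapply conv_trans; eauto. now apply conv_sym.
Qed.

Lemma red_I a : conv (App I a) a.
Proof. apply conv_step. apply (step_beta (Var 0) a). Qed.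

Lemma red_K a b : conv (App (App K a) b) a.
Proof.
  eapply conv_trans; [apply conv_appl, conv_step, (step_beta (Lam (Var 1)) a)|].
  simpl. eapply conv_trans; [apply conv_step, step_beta|]. rewrite subst_lift. apply conv_refl.
Qed.

Lemma red_KI t a : conv (App (App (App K I) t) a) a.
Proof. eapply conv_trans; [apply conv_appl, red_K|apply red_I]. Qed.

Lemma red_fold f d : conv (App (App fold f) d) (App d f).
Proof.
  eapply conv_trans; [apply conv_appl, conv_step, step_beta|]. simpl.
  eapply conv_trans; [apply conv_step, step_beta|]. simpl.
  unfold lift. rewrite subst_lift. apply conv_refl.
Qed.

Lemma wf_lift_S t : forall n c, wf n t -> wf (S n) (lift_at c t).
Proof.
  induction t; simpl; intros.
  - destruct (n <? c); simpl; lia.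
  - auto.
  - destruct H; split; auto.
Qed.

Lemma wf_fmap R : forall k, wf 0 (fmap k R).
Proof.
  induction R; intros k; simpl; auto.
  - destruct (n =? k); simpl; lia.
  - repeat split; try lia; unfold lift; repeat apply wf_lift_S; auto.
  - unfold lift. rewrite (wf_lift _ 0) by auto. simpl. split; [eapply wf_mono; eauto|]; lia.
Qed.

Lemma wfc_lift R k c : lift_at c (fmap k R) = fmap k R.
Proof. eapply wf_lift; [apply wf_fmap|lia]. Qed.
Lemma wfc_subst R k j s : subst_at j s (fmap k R) = fmap k R.
Proof. eapply wf_subst; [apply wf_fmap|lia]. Qed.

Lemma liftn_S k t : liftn (S k) t = lift_at k (liftn k t).
Proof.
  rewrite !liftn_rename, lift_rename, rename_comp. apply rename_ext. intros n.
  unfold liftr. destruct (Nat.ltb_spec (k + n) k); lia.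
Qed.

Lemma subst_liftn k s t : subst_at k s (liftn (S k) t) = liftn k t.
Proof. rewrite liftn_S. apply subst_lift. Qed.

Lemma red_fmap_eq k h x : conv (App (App (fmap k (TVar k)) h) x) (App h x).
Proof. simpl. rewrite Nat.eqb_refl. apply conv_appl, red_I. Qed.

Lemma red_fmap_neq n k h x : n <> k -> conv (App (App (fmap k (TVar n)) h) x) x.
Proof. intros H. simpl. destruct (Nat.eqb_spec n k); try easy. apply red_KI. Qed.

Lemma red_fmap_all k A h x : conv (App (App (fmap k (All A)) h) x) (App (App (fmap (S k) A) h) x).
Proof.
  simpl. unfold lift. rewrite wfc_lift. apply conv_appl.
  eapply conv_trans; [apply conv_step, step_beta|]. simpl. rewrite wfc_subst. apply conv_refl.
Qed.

Lemma red_fmap_arr k A B h x y :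
  conv (App (App (App (fmap k (Arr A B)) h) x) y)
       (App (App (fmap k B) h) (App x (App (App (fmap k A) h) y))).
Proof.
  change (fmap k (Arr A B)) with (Lam (Lam (comp (App (liftn 2 (fmap k B)) (Var 1)) (comp (Var 0) (App (liftn 2 (fmap k A)) (Var 1)))))).
  rewrite !wf_liftn by apply wf_fmap. unfold comp, lift. simpl.
  rewrite !wfc_lift.
  eapply conv_trans.
  { apply conv_appl, conv_appl, conv_appl, conv_lam, conv_lam, conv_lam, conv_appr, conv_step, step_beta. }
  simpl. rewrite !wfc_subst.
  eapply conv_trans; [apply conv_appl, conv_appl, conv_step, step_beta|]. simpl. rewrite !wfc_subst.
  eapply conv_trans; [apply conv_appl, conv_step, step_beta|]. simpl. rewrite !wfc_subst.
  change (lift (lift h)) with (liftn 2 h). rewrite !subst_liftn. simpl.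
  eapply conv_trans; [apply conv_step, step_beta|]. simpl. rewrite !wfc_subst.
  unfold lift. rewrite !subst_lift. apply conv_refl.
Qed.

Lemma red_in R x f :
  conv (App (App (inXR R) x) f) (App f (App (App (fmap 0 R) (App fold f)) x)).
Proof.
  unfold inXR. rewrite wf_liftn by apply wf_fmap.
  eapply conv_trans; [apply conv_appl, conv_step, step_beta|]. simpl. rewrite !wfc_subst.
  eapply conv_trans; [apply conv_step, step_beta|]. simpl. rewrite !wfc_subst.
  unfold lift. rewrite !subst_lift. apply conv_refl.
Qed.

Lemma FP R : isF R -> forall k g1 g2 h h', env_ok g1 -> env_ok g2 ->
  (forall n, n <> k -> g1 n = g2 n) ->
  (forall d d', g1 k d d' -> g2 k (App h d) (App h' d')) ->
  (occ k true R -> forall x x', interp g1 R x x' ->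
     interp g2 R (App (App (fmap k R) h) x) (App (App (fmap k R) h') x')) /\
  (occ k false R -> forall x x', interp g2 R x x' ->
     interp g1 R (App (App (fmap k R) h) x) (App (App (fmap k R) h') x')).
Proof.
  induction R; cbn [isF occ interp occurs negb]; intros HF k g1 g2 h h' Hg1 Hg2 Hag Hh; try contradiction.
  - destruct (Nat.eqb_spec n k).
    + subst. split; intros Ho x x' Hx; try discriminate.
      eapply Hg2; [apply Hh, Hx|apply red_fmap_eq|apply red_fmap_eq].
    + split; intros _ x x' Hx.
      * eapply Hg2; [|apply red_fmap_neq; auto|apply red_fmap_neq; auto]. rewrite <- Hag; auto.
      * eapply Hg1; [|apply red_fmap_neq; auto|apply red_fmap_neq; auto]. rewrite Hag; auto.
  - destruct HF as [HA HB].
    destruct (IHR1 HA k g1 g2 h h' Hg1 Hg2 Hag Hh) as [A1 A2].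
    destruct (IHR2 HB k g1 g2 h h' Hg1 Hg2 Hag Hh) as [B1 B2].
    split; intros [OA OB] x x' Hx y y' Hy.
    + eapply interp_bclosed; [exact Hg2| |apply red_fmap_arr|apply red_fmap_arr].
      apply B1; auto; apply Hx; apply A2; auto.
    + eapply interp_bclosed; [exact Hg1| |apply red_fmap_arr|apply red_fmap_arr].
      apply B2; auto; apply Hx; apply A1; auto.
  - assert (forall q, bclosed q ->
      (occ (S k) true R -> forall x x', interp (scons q g1) R x x' ->
         interp (scons q g2) R (App (App (fmap (S k) R) h) x) (App (App (fmap (S k) R) h') x')) /\
      (occ (S k) false R -> forall x x', interp (scons q g2) R x x' ->
         interp (scons q g1) R (App (App (fmap (S k) R) h) x) (App (App (fmap (S k) R) h') x'))) as IH.
    { intros q Hq. apply IHR; auto using env_ok_scons.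
      intros [|n] Hn; simpl; auto. }
    split; intros Ho x x' Hx q Hq; destruct (IH q Hq) as [I1 I2].
    + eapply interp_bclosed; [apply env_ok_scons; eauto| apply I1; auto|apply red_fmap_all|apply red_fmap_all].
    + eapply interp_bclosed; [apply env_ok_scons; eauto| apply I2; auto|apply red_fmap_all|apply red_fmap_all].
Qed.

Lemma fa_arr_inv p A B : forallp p (Arr A B) -> forallp (negb p) A /\ forallp p B.
Proof. intros H; inversion H; subst; auto. Qed.
Lemma fa_all_inv p A : forallp p (All A) -> p = true /\ forallp true A.
Proof. intros H; inversion H; subst; auto. Qed.

Lemma IE R : isF R -> forall g, (forall n, occurs n R -> forall a b, g n a b <-> conv a b) ->
  (forallp true R -> forall x x', interp g R x x' -> conv x x') /\
  (forallp false R -> forall x x', conv x x' -> interp g R x x').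
Proof.
  induction R; cbn [isF occ interp occurs negb]; intros HF g Hg; try contradiction.
  - split; intros _ x x'; apply Hg; auto.
  - destruct HF as [HA HB].
    destruct (IHR1 HA g (fun n o => Hg n (or_introl o))) as [A1 A2].
    destruct (IHR2 HB g (fun n o => Hg n (or_intror o))) as [B1 B2].
    split; intros Hf x x' Hx; apply fa_arr_inv in Hf; destruct Hf as [FA FB]; simpl in *.
    + apply EXT. intros w. apply B1; auto; apply Hx; apply A2; auto. apply conv_refl.
    + intros y y' Hy. apply B2; auto. apply conv_app; auto.
  - assert (IH : (forallp true R -> forall x x', interp (scons conv g) R x x' -> conv x x')).
    { apply IHR; auto. intros [|n] Hn a b; simpl; [tauto|]. apply Hg; auto. }
    split; intros Hf; apply fa_all_inv in Hf; destruct Hf as [Hp FA]; try discriminate.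
    intros x x' Hx. apply IH; auto. apply Hx.
    intros t1 t2 t1' t2' H1 H2 H3. eapply conv_trans; [exact H2|]. eapply conv_trans; [exact H1|]. now apply conv_sym.
Qed.

Lemma GL R : isF R -> forall k g h,
  (forall n, n <> k -> occurs n R -> forall a b, g n a b <-> conv a b) ->
  (forall a b, g k a b <-> conv (App h a) b) ->
  (forallp true R -> occ k true R -> forall x x', interp g R x x' ->
      conv (App (App (fmap k R) h) x) x') /\
  (forallp false R -> occ k false R -> forall x x', conv (App (App (fmap k R) h) x') x ->
      interp g R x x').
Proof.
  induction R; cbn [isF occ interp occurs negb]; intros HF k g h Hg Hk; try contradiction.
  - destruct (Nat.eqb_spec n k).
    + subst. split; intros _ Ho x x' Hx; try discriminate.
      eapply conv_trans; [apply red_fmap_eq|]. apply Hk; auto.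
    + split; intros _ _ x x' Hx.
      * eapply conv_trans; [apply red_fmap_neq; auto|]. apply (Hg n); auto.
      * apply (Hg n); auto. apply conv_sym. eapply conv_trans; [|exact Hx].
        apply conv_sym, red_fmap_neq; auto.
  - destruct HF as [HA HB].
    destruct (IHR1 HA k g h (fun n ne o => Hg n ne (or_introl o)) Hk) as [A1 A2].
    destruct (IHR2 HB k g h (fun n ne o => Hg n ne (or_intror o)) Hk) as [B1 B2].
    split; intros Hf [OA OB] x x' Hx; apply fa_arr_inv in Hf; destruct Hf as [FA FB]; simpl in *.
    + apply EXT. intros w. eapply conv_trans; [apply red_fmap_arr|].
      apply B1; auto; apply Hx; apply A2; auto. apply conv_refl.
    + intros y y' Hy. apply B2; auto.
      eapply conv_trans; [|apply conv_appl; exact Hx].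
      eapply conv_trans; [|apply conv_sym, red_fmap_arr].
      apply conv_appr, conv_appr. apply conv_sym. apply A1; auto.
  - assert (IH : forallp true R -> occ (S k) true R -> forall x x', interp (scons conv g) R x x' ->
      conv (App (App (fmap (S k) R) h) x) x').
    { apply IHR; auto. intros [|n] Hn Ho a b; simpl; [tauto|]. apply Hg; auto. }
    split; intros Hf; apply fa_all_inv in Hf; destruct Hf as [Hp FA]; try discriminate.
    intros Ho x x' Hx. eapply conv_trans; [apply red_fmap_all|]. apply IH; auto. apply Hx.
    intros t1 t2 t1' t2' H1 H2 H3. eapply conv_trans; [exact H2|]. eapply conv_trans; [exact H1|]. now apply conv_sym.
Qed.

Lemma bclosed_conv : bclosed conv.
Proof.
  intros t1 t2 t1' t2' H1 H2 H3. eapply conv_trans; [exact H2|]. eapply conv_trans; [exact H1|]. now apply conv_sym.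
Qed.

Lemma tsub_intro g A B : env_ok g -> (forall a a', interp g A a a' -> interp g B a a') ->
  forall t t', interp g (tsub A B) t t'.
Proof.
  intros Hg H t t'. unfold tsub, bullet. simpl.
  exists (App (App K I) t'). split; [|apply conv_refl].
  exists (App (App K I) t). split; [apply conv_refl|].
  intros a a' Ha. eapply interp_bclosed; [exact Hg|apply H, Ha|apply red_KI|apply red_KI].
Qed.

Lemma Dind_intro R g a a' : env_ok g ->
  (forall r, bclosed r -> interp (scons r g) (Arr R (TVar 0)) (inXR R) (inXR R) -> r a a') ->
  interp g (Dind R) a a'.
Proof.
  intros Hg H. unfold Dind, timp, bullet, brR, brL. cbn [interp].
  intros r Hr. exists (App K a'). split; [|apply conv_refl].
  exists (App K a). split; [apply conv_refl|].
  intros f f' [w [[w2 [Hw2 Hi]] Hw]].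
  eapply Hr; [apply (H r Hr)| apply red_K| apply red_K].
  eapply interp_bclosed; [apply env_ok_scons; eauto|exact Hi| |].
  - eapply conv_trans; [apply conv_sym, red_K|exact Hw2].
  - eapply conv_trans; [apply conv_sym, red_K|exact Hw].
Qed.

Lemma Dind_elim R g a a' : env_ok g -> interp g (Dind R) a a' ->
  forall r, bclosed r -> interp (scons r g) (Arr R (TVar 0)) (inXR R) (inXR R) -> r a a'.
Proof.
  intros Hg H r Hr Hin. unfold Dind, timp, bullet, brR, brL in H. cbn [interp] in H.
  destruct (H r Hr) as [u [[v [Hv Hvu]] Hu]].
  assert (HA : r (App v I) (App u I)).
  { apply Hvu. exists (App (App K (inXR R)) I). split; [|apply conv_refl].
    exists (App (App K (inXR R)) I). split; [apply conv_refl|].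
    exact (interp_bclosed (Arr R (TVar 0)) (scons r g) (env_ok_scons _ _ Hr Hg) _ _ _ _ Hin (red_K _ _) (red_K _ _)). }
  eapply Hr; [exact HA| |].
  - eapply conv_trans; [apply conv_sym, (red_K a I)|]. apply conv_appl; auto.
  - eapply conv_trans; [apply conv_sym, (red_K a' I)|]. apply conv_appl; auto.
Qed.

Lemma part1 R g : isF R -> occ 0 true R -> env_ok g ->
  forall a a', interp g (Dind R) a a' -> interp g (Dparam R) a a'.
Proof.
  intros HF Ho Hg a a' Hind. unfold Dparam. cbn [interp].
  intros r Hr f f' Hf.
  set (s := fun d d' => r (App d f) (App d' f')).
  assert (Hs : bclosed s).
  { intros t1 t2 t1' t2' H1 H2 H3. unfold s in *. eapply Hr; [exact H1|apply conv_appl; auto|apply conv_appl; auto]. }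
  apply (Dind_elim R g a a' Hg Hind s Hs).
  cbn [interp]. intros x x' Hx. simpl. unfold s.
  eapply Hr; [|apply red_in|apply red_in].
  apply Hf.
  destruct (FP R HF 0 (scons s g) (scons r g) (App fold f) (App fold f')) as [P1 _];
    auto using env_ok_scons.
  - intros [|n] Hn; simpl; auto. lia.
  - intros d d' Hd. simpl. eapply Hr; [exact Hd|apply red_fold|apply red_fold].
Qed.

Lemma part2 R g : isF R -> FV_is_X R -> occ 0 true R -> env_ok g -> forallp true R ->
  forall a a', interp g (Dparam R) a a' -> interp g (Dind R) a a'.
Proof.
  intros HF [_ Hfv] Ho Hg HFa a a' Hp. unfold Dparam in Hp. cbn [interp] in Hp.
  apply Dind_intro; auto. intros r Hr Hin.
  assert (S1 : conv a a').
  { apply EXT. intros w. apply (Hp conv bclosed_conv w w).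
    intros x x' Hx. simpl. apply conv_appr.
    refine (proj1 (IE R HF (scons conv g) _) HFa x x' Hx).
    intros [|n] Hn a0 b0; simpl; [tauto|]. exfalso; eapply Hfv; [|exact Hn]; lia. }
  assert (S2 : conv (App a (inXR R)) a').
  { apply EXT. intros w.
    set (Q := fun d d' => conv (App (App fold w) d) d').
    assert (HQ : bclosed Q).
    { intros t1 t2 t1' t2' H1 H2 H3. unfold Q in *. eapply bclosed_conv; [exact H1| |exact H3].
      apply conv_appr; auto. }
    assert (HH := Hp Q HQ (inXR R) w). simpl in HH. unfold Q in HH.
    eapply conv_trans; [apply conv_sym, red_fold|]. apply HH.
    intros x x' Hx.
    eapply conv_trans; [apply red_fold|].
    eapply conv_trans; [apply red_in|]. apply conv_appr.
    refine (proj1 (GL R HF 0 (scons Q g) (App fold w) _ _) HFa Ho x x' Hx).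
    - intros [|n] Hn Ho' a0 b0; [lia|]. exfalso; eapply Hfv; [|exact Ho']; lia.
    - intros a0 b0; simpl; unfold Q; tauto. }
  assert (S3 : r (App a (inXR R)) (App a' (inXR R))) by (apply Hp; auto).
  eapply Hr; [exact S3| |].
  - eapply conv_trans; [exact S1|apply conv_sym; exact S2].
  - eapply conv_trans; [apply conv_sym; exact S2|]. apply conv_appl, S1.
Qed.

Theorem mainTheorem2 (R : rty) (g : env) :
  isF R -> FV_is_X R -> occ 0 true R -> env_ok g ->
  (forall t t', interp g (tsub (Dind R) (Dparam R)) t t') /\
  (forallp true R -> forall t t', interp g (tsub (Dparam R) (Dind R)) t t') /\
  (forallp true R -> forall t t', interp g (tequiv (Dind R) (Dparam R)) t t').
Proof.
  intros HF HX Ho Hg.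
  assert (H1 : forall t t', interp g (tsub (Dind R) (Dparam R)) t t')
    by (apply tsub_intro; auto; apply part1; auto).
  assert (H2 : forallp true R -> forall t t', interp g (tsub (Dparam R) (Dind R)) t t')
    by (intros; apply tsub_intro; auto; apply part2; auto).
  split; [exact H1|split; [exact H2|]].
  intros Hfa t t'. unfold tequiv. cbn [interp]. exists t. split; [apply H1|apply H2; auto].
Qed.
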